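(* In the timely decision problem described in the context, fix $\eta$ and a state $(\mu_t,\nu_t)$ with $\nu_t=1$ and $\mu_t\notin\mathcal{T}(\eta)$. Take the uncertainty function $U=V^*(\cdot,\cdot;\eta)$ in the definition of the surprise $I_t$. Then there is a function $h$, increasing in each of its two arguments, such that the optimal acquisition is $$\lambda_t^*=\arg\sup_{\lambda\in\Lambda}\Big(h\big(I_t(\lambda),S_t(\lambda)\big)-\eta_{c,\lambda}c_\lambda\Big),$$ i.e. the optimal acquisition trades off surprise and suspense in addition to the immediate cost of acquisition.
   Context: $\Theta,\Lambda,\Omega$ finite nonempty; $\Delta(\Theta)$ the simplex. For $\theta\in\Theta,\lambda\in\Lambda$: known distributions $q_{\theta,\lambda}$ on $\Omega$ and $p_{\theta,\lambda}\in(0,1)$. Latent $\theta\sim\mu_0$. Survival $\nu_t$, $\nu_0=1$. At time $t$ with $\nu_t=1$ the agent either commits to a decision $\hat\theta\in\Theta$ or performs $\lambda_t\in\Lambda$; given $\theta$, $\nu_{t+1}=0$ w.p. $p_{\theta,\lambda_t}$, else $\nu_{t+1}=1$ and $\omega_{t+1}\sim q_{\theta,\lambda_t}$ is observed. Deadline $\delta=\min\{t:\nu_t=0\}$, $\tau=\min\{\delta,\sigma\}$ with $\sigma$ the decision time. Posterior updates: $M(\lambda,\mu,\omega)(\theta)\propto(1-p_{\theta,\lambda})q_{\theta,\lambda}(\omega)\mu(\theta)$, $\bar M(\lambda,\mu)(\theta)\propto p_{\theta,\lambda}\mu(\theta)$. Costs $c_\lambda>0$; weights $\eta=(\eta_a,\eta_b,\eta_c)$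 with positive entries. Loss $\ell=\sum_{\theta'}\eta_{a,\theta'}\mathbf 1\{\theta=\theta',\theta\neq\hat\theta,\tau<\delta\}+\sum_{\theta'}\eta_{b,\theta'}\mathbf 1\{\theta=\theta',\tau=\delta\}+\sum_{t<\tau}\eta_{c,\lambda_t}c_{\lambda_t}$. $V^*(\mu,\nu;\eta)$ is the optimal expected to-go loss. $\bar Q_{\hat\theta}(\mu,\nu;\eta)=(1-\nu)\sum_{\theta'}\eta_{b,\theta'}\mu(\theta')+\nu\sum_{\theta'\ne\hat\theta}\eta_{a,\theta'}\mu(\theta')$, $\bar Q=\min_{\hat\theta}\bar Q_{\hat\theta}$; $Q^*_\lambda(\mu,\nu;\eta)=(1-\nu)V^*(\mu,0;\eta)+\eta_{c,\lambda}c_\lambda+\nu\big(V^*(\bar M(\lambda,\mu),0;\eta)\sum_{\theta'}p_{\theta',\lambda}\mu(\theta')+\sum_\omega V^*(M(\lambda,\mu,\omega),1;\eta)\sum_{\theta'}(1-p_{\theta',\lambda})q_{\theta',\lambda}(\omega)\mu(\theta')\big)$, $Q^*=\min_\lambda Q^*_\lambda$; the optimal acquisition is $\lambda_t^*=\arg\inf_\lambda Q^*_\lambda(\mu_t,\nu_t;\eta)$. Termination set $\mathcal T(\eta)=\{\mu:Q^*(\mu,\nu_t;\eta)\ge\bar Q(\mu,\nu_t;\eta)\}$. For $U:\Delta(\Theta)\times\{0,1\}\to\mathbb{R}_+$, $(\mathbb{M}_\lambda U)(\mu,\nu)=(1-\nu)U(\mu,\nu)+\nu\,\mathbb{E}[U(M(\lambda,\mu,\omega),1)]$,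 where $\omega$ has the conditional law given survival, $\mathbb{P}(\omega)=\sum_{\theta'}(1-p_{\theta',\lambda})q_{\theta',\lambda}(\omega)\mu(\theta')/(1-\sum_{\theta'}p_{\theta',\lambda}\mu(\theta'))$. Surprise: $I_t(\lambda)=U(\mu_t,\nu_t)-\big(1-\sum_{\theta'}p_{\theta',\lambda}\mu_t(\theta')\big)(\mathbb{M}_\lambda U)(\mu_t,\nu_t)$. Suspense: $S_t(\lambda)=1-\frac{\sum_{\theta'}\eta_{b,\theta'}p_{\theta',\lambda}\mu_t(\theta')}{\sum_{\theta'}\eta_{b,\theta'}\mu_t(\theta')}$. *)

(* Defs.v *)
From HB Require Import structures.
From mathcomp Require Import all_boot all_order all_algebra.
From mathcomp Require Import boolp classical_sets reals.
Set Implicit Arguments. Unset Strict Implicit. Unset Printing Implicit Defensive.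
Import Order.TTheory GRing.Theory Num.Theory.
Local Open Scope ring_scope.
Local Open Scope classical_set_scope.

Section TimelyDecision.
Variables (R : realType) (Theta Lambda Omega : finType).

Record model := Model {
  qm : Theta -> Lambda -> Omega -> R;
  pm : Theta -> Lambda -> R;
  cm : Lambda -> R }.

Record weights := Weights {
  eta_a : Theta -> R;
  eta_b : Theta -> R;
  eta_c : Lambda -> R }.

(* Beliefs are (functions representing) points of the simplex Delta(Theta). *)
Definition belief := Theta -> R.

Definition is_dist (T : finType) (f : T -> R) :=
  (forall x, 0 <= f x) /\ \sum_x f x = 1.

Definition valid_model (m : model) :=
  [/\ forall th l, 0 < pm m th l < 1,
      forall th l, is_dist (qm m th l)
    & forall l, 0 < cm m l].

Definition valid_weights (e : weights) :=
  [/\ forall th, 0 < eta_a e th, forall th, 0 < eta_b e th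
    & forall l, 0 < eta_c e l].

Variables (m : model) (e : weights).

Definition Mpost (l : Lambda) (mu : belief) (w : Omega) : belief :=
  fun th => (1 - pm m th l) * qm m th l w * mu th /
            \sum_th' (1 - pm m th' l) * qm m th' l w * mu th'.

Definition Mbar (l : Lambda) (mu : belief) : belief :=
  fun th => pm m th l * mu th / \sum_th' pm m th' l * mu th'.

(* Deterministic policies: given the history of observations (most recent
   first), either commit to a decision (inl) or acquire lambda (inr). *)
Definition policy := seq Omega -> (Theta + Lambda)%type.

(* Expected loss accrued during the first n steps, for the (unnormalized)
   measure w on Theta (w th = mu(th) * P(current history, alive | th)). *)
Fixpoint Jn (n : nat) (pi : policy) (w : Theta -> R) : R :=
  match n with
  | 0 => 0
  | n'.+1 =>
    match pi [::] with
    | inl th' => \sum_(th | th != th') eta_a e th * w th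
    | inr l => eta_c e l * cm m l * \sum_th w th
               + \sum_th eta_b e th * pm m th l * w th
               + \sum_w' Jn n' (fun h => pi (w' :: h))
                   (fun th => w th * (1 - pm m th l) * qm m th l w')
    end
  end.

(* Expected total loss of a policy (monotone limit of Jn). *)
Definition exp_loss (pi : policy) (mu : belief) : R :=
  sup (range (fun n => Jn n pi mu)).

(* Optimal expected to-go loss V*(mu, nu; eta).  For nu = 0 the deadline
   has been hit and the to-go loss is sum eta_b mu. *)
Definition Vstar (mu : belief) (nu : bool) : R :=
  if nu then inf (range (fun pi : policy => exp_loss pi mu))
  else \sum_th eta_b e th * mu th.

Definition Qbar_th (thh : Theta) (mu : belief) (nu : bool) : R :=
  (1 - nu%:R) * \sum_th eta_b e th * mu th
  + nu%:R * \sum_(th | th != thh) eta_a e th * mu th.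

Definition Qbar (mu : belief) (nu : bool) : R :=
  inf (range (fun thh => Qbar_th thh mu nu)).

Definition Qlam (l : Lambda) (mu : belief) (nu : bool) : R :=
  (1 - nu%:R) * Vstar mu false + eta_c e l * cm m l
  + nu%:R * (Vstar (Mbar l mu) false * \sum_th pm m th l * mu th
             + \sum_w Vstar (Mpost l mu w) true
                 * \sum_th (1 - pm m th l) * qm m th l w * mu th).

Definition Qstar (mu : belief) (nu : bool) : R :=
  inf (range (fun l => Qlam l mu nu)).

Definition in_T (mu : belief) (nu : bool) : Prop := Qbar mu nu <= Qstar mu nu.

Definition Pobs (l : Lambda) (mu : belief) (w : Omega) : R :=
  \sum_th (1 - pm m th l) * qm m th l w * mu th /
  (1 - \sum_th pm m th l * mu th).

Definition MU (U : belief -> bool -> R) (l : Lambda) (mu : belief) (nu : bool) : R :=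
  (1 - nu%:R) * U mu nu + nu%:R * \sum_w U (Mpost l mu w) true * Pobs l mu w.

Definition surprise (U : belief -> bool -> R) (l : Lambda) (mu : belief) (nu : bool) : R :=
  U mu nu - (1 - \sum_th pm m th l * mu th) * MU U l mu nu.

Definition suspense (l : Lambda) (mu : belief) : R :=
  1 - (\sum_th eta_b e th * pm m th l * mu th) / (\sum_th eta_b e th * mu th).

End TimelyDecision.

(* Main.v *)
Require Import Defs.
From HB Require Import structures.
From mathcomp Require Import all_boot all_order all_algebra.
From mathcomp Require Import boolp classical_sets reals.
From mathcomp Require Import ring lra.
Import Order.TTheory GRing.Theory Num.Theory.
Local Open Scope ring_scope.

Theorem proposition5 (R : realType) (Theta Lambda Omega : finType)
  (m : model R Theta Lambda Omega) (e : weights R Theta Lambda)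
  (mu : Theta -> R) :
  (0 < #|Lambda|)%N ->
  valid_model m -> valid_weights e -> is_dist mu ->
  ~ in_T m e mu true ->
  exists h : R -> R -> R,
    [/\ forall s, {homo h^~ s : x y / x < y},
        forall i, {homo h i : x y / x < y}
      & forall l : Lambda,
          (forall l', Qlam m e l mu true <= Qlam m e l' mu true) <->
          (forall l',
             h (surprise m (Vstar m e) l' mu true) (suspense m e l' mu)
               - eta_c e l' * cm m l'
             <= h (surprise m (Vstar m e) l mu true) (suspense m e l mu)
               - eta_c e l * cm m l)].
Proof.
move=> _ [Hp Hq Hc] [Ha Hb Hec] [Hmu0 Hmu1] _.
have [th0 Hth0] : exists th, 0 < mu th.
  case: (pselect (exists th, 0 < mu th)) => // Hn; exfalso.
  have : \sum_th mu th = 0.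
    apply: big1 => th _; apply/eqP; rewrite eq_le Hmu0 andbT.
    by rewrite leNgt; apply/negP => H; apply: Hn; exists th.
  by rewrite Hmu1 => /eqP; rewrite oner_eq0.
have possum : forall f : Theta -> R, (forall th, 0 < f th) ->
    0 < \sum_th f th * mu th.
  move=> f Hf; rewrite (bigD1 th0) //=.
  apply: ltr_pwDl; first exact: mulr_gt0.
  by apply: sumr_ge0 => th _; apply: mulr_ge0 => //; apply: ltW.
set B := \sum_th eta_b e th * mu th.
have HB : 0 < B by apply: possum.
pose K := Vstar m e mu true + B.
pose h := fun i s : R => i + B * s.
pose a := fun l => h (surprise m (Vstar m e) l mu true) (suspense m e l mu)
               - eta_c e l * cm m l.
have EQ : forall l, Qlam m e l mu true = K - a l.
  move=> l.
  set Pd := \sum_th pm m th l * mu th.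
  have HPd : 0 < Pd by apply: possum => th; case/andP: (Hp th l).
  have H1Pd : 1 - Pd = \sum_th (1 - pm m th l) * mu th.
    rewrite -[X in X - _]Hmu1 /Pd -sumrB; apply: eq_bigr => th _; lra.
  have HPd1 : 0 < 1 - Pd.
    rewrite H1Pd; apply: possum => th; case/andP: (Hp th l) => _ ?; lra.
  have A : Vstar m e (Mbar m l mu) false * Pd
           = \sum_th eta_b e th * pm m th l * mu th.
    rewrite /Vstar /Mbar mulr_suml; apply: eq_bigr => th _.
    rewrite -/Pd; field; lra.
  have MB : (1 - Pd) * MU m (Vstar m e) l mu true
        = \sum_w Vstar m e (Mpost m l mu w) true
             * \sum_th (1 - pm m th l) * qm m th l w * mu th.
    rewrite /MU /= subrr mul0r add0r mul1r mulr_sumr; apply: eq_bigr => w _.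
    rewrite /Pobs -/Pd -mulr_suml; field; lra.
  have SB : B * suspense m e l mu = B - \sum_th eta_b e th * pm m th l * mu th.
    rewrite /suspense -/B; field; lra.
  rewrite /a /h /K /Qlam /surprise -/Pd MB SB -A /= subrr mul0r add0r mul1r.
  lra.
exists h; split.
- by move=> s x y xy; rewrite /h ltrD2r.
- by move=> i x y xy; rewrite /h ltrD2l ltr_pM2l.
- move=> l; rewrite -/(a l); split => H l'.
  + have := H l'; rewrite !EQ -/(a l'); lra.
  + have := H l'; rewrite !EQ -/(a l'); lra.
Qed.
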